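(* Let $\epsilon>0$, $n\ge1$, let $\mathbf{w}\in\mathbb{R}^d$ be non-increasing, and let $1\le k\le d-1$ with $\mathbf{w}^k_{max}>\mathbf{w}^k_{min}$. For the additive mechanism with parameters $(\epsilon,\mathbf{w},k)$, $$\mathrm{risk}_{\mathrm{MM}}=\frac{k|a_k-b_k|+(d-k)|b_k|}{n},\qquad\mathrm{risk}_{\mathrm{EM}}=\frac{k|a_k-b_k|+(d-k)|b_k|}{n}\ \text{(for every input vote)},\qquad\mathrm{risk}_{\mathrm{DD}}\le2k|a_k|.$$
   Context: Candidates are $C_1,\dots,C_d$; a vote is a linear ordering; the scored vote $v$ assigns score $w_j$ to the candidate at rank $j$. Let $\mathcal{C}^k$ be the set of $k$-element subsets of candidates, $\mathbf{w}^k_{max}=\sum_{j=1}^kw_j$, $\mathbf{w}^k_{min}=\sum_{j=d-k+1}^dw_j$, $W=\sum_jw_j$. The additive mechanism on input $v$ outputs $S\in\mathcal{C}^k$ with probability $$\Pr[S\mid v]=\frac{\sum_{C_{j'}\in S}v_{j'}-\mathbf{w}^k_{min}}{\mathbf{w}^k_{max}-\mathbf{w}^k_{min}}\cdot\frac{e^\epsilon-1}{\Phi}+\frac1\Phi,\qquad \Phi=\binom dk\frac{\frac kd(e^\epsilon-1)W-e^\epsilon\mathbf{w}^k_{min}+\mathbf{w}^k_{max}}{\mathbf{w}^k_{max}-\mathbf{w}^k_{min}},$$ and releases the private view $\tilde v_j=a_k[C_j\in S]-b_k$, where $a_k=\big[W(e^\epsilon-1)-\tfrac dke^\epsilon\mathbf{w}^k_{min}+\tfrac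 dk\mathbf{w}^k_{max}\big]\frac{d-1}{(d-k)(e^\epsilon-1)}$ and $b_k=\big[\tfrac{(k-1)(e^\epsilon-1)}{d-1}W-e^\epsilon\mathbf{w}^k_{min}+\mathbf{w}^k_{max}\big]\frac{d-1}{(d-k)(e^\epsilon-1)}$. Let $\mathcal{D}_{\tilde v}$ be the set of all possible private views, $n$ the number of voters. Risk metrics: $\mathrm{risk}_{\mathrm{MM}}=\max_{\tilde v\in\mathcal{D}_{\tilde v}}\frac{|\tilde v|_1}{n}$; $\mathrm{risk}_{\mathrm{EM}}=\mathbb{E}[\frac{|\tilde v|_1}{n}]$ over the mechanism's randomness for a given input; $\mathrm{risk}_{\mathrm{DD}}=\max_{\tilde v,\tilde v'\in\mathcal{D}_{\tilde v}}|\tilde v-\tilde v'|_1$. *)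

(* Defs.v *)
From HB Require Import structures.
From mathcomp Require Import all_boot all_order all_algebra perm.
From mathcomp Require Import reals.
From mathcomp.analysis Require Import sequences exp.
Set Implicit Arguments. Unset Strict Implicit. Unset Printing Implicit Defensive.
Import Order.TTheory GRing.Theory Num.Theory.
Local Open Scope ring_scope.

(* Candidates C_1..C_d are indexed by 'I_d; ranks 1..d by 'I_d (0-based). *)

Section AdditiveMechanism.
Variables (R : realType) (d : nat) (w : 'I_d -> R) (k : nat) (eps : R).

Definition wmax : R := \sum_(j < d | (j < k)%N) w j.
Definition wmin : R := \sum_(j < d | (d - k <= j)%N) w j.
Definition Wsum : R := \sum_(j < d) w j.

(* A vote is a linear ordering, given by s : 'S_d mapping a candidate to its
   (0-based) rank; the scored vote assigns w_(rank) to each candidate. *)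
Definition scored_vote (s : 'S_d) : 'I_d -> R := fun c => w (s c).

Definition Phi : R :=
  ('C(d, k))%:R *
  (((k%:R / d%:R) * (expR eps - 1) * Wsum - expR eps * wmin + wmax)
     / (wmax - wmin)).

Definition mech_prob (v : 'I_d -> R) (S : {set 'I_d}) : R :=
  (\sum_(c in S) v c - wmin) / (wmax - wmin) * ((expR eps - 1) / Phi)
  + 1 / Phi.

Definition a_k : R :=
  (Wsum * (expR eps - 1) - (d%:R / k%:R) * expR eps * wmin
     + (d%:R / k%:R) * wmax)
  * ((d%:R - 1) / ((d%:R - k%:R) * (expR eps - 1))).

Definition b_k : R :=
  ((k%:R - 1) * (expR eps - 1) / (d%:R - 1) * Wsum - expR eps * wmin + wmax)
  * ((d%:R - 1) / ((d%:R - k%:R) * (expR eps - 1))).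

Definition priv_view (S : {set 'I_d}) : 'I_d -> R :=
  fun j => a_k * (j \in S)%:R - b_k.

Definition l1norm (x : 'I_d -> R) : R := \sum_(j < d) `|x j|.

(* D_{tilde v} = { priv_view S | S in C^k }; all l1 quantities are >= 0,
   so a max with neutral element 0 over the (nonempty) index set is the max. *)
Definition riskMM (n : nat) : R :=
  \big[Num.max/0]_(S : {set 'I_d} | #|S| == k) (l1norm (priv_view S) / n%:R).

Definition riskEM (n : nat) (s : 'S_d) : R :=
  \sum_(S : {set 'I_d} | #|S| == k)
     mech_prob (scored_vote s) S * (l1norm (priv_view S) / n%:R).

Definition riskDD : R :=
  \big[Num.max/0]_(S : {set 'I_d} | #|S| == k)
    \big[Num.max/0]_(S' : {set 'I_d} | #|S'| == k)
       l1norm (fun j => priv_view S j - priv_view S' j).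

End AdditiveMechanism.

(* Main.v *)
Require Import Defs.
From HB Require Import structures.
From mathcomp Require Import all_boot all_order all_algebra perm.
From mathcomp Require Import reals.
From mathcomp.analysis Require Import sequences exp.
From mathcomp Require Import ring lra zify.
Import Order.TTheory GRing.Theory Num.Theory.
Local Open Scope ring_scope.
Lemma cnt_sym (R : realType) d k (c c' : 'I_d) :
  \sum_(S : {set 'I_d} | #|S| == k) ((c \in S)%:R : R) =
  \sum_(S : {set 'I_d} | #|S| == k) ((c' \in S)%:R : R).
Proof.
have inj := imset_inj (@perm_inj _ (tperm c c')).
rewrite (reindex_inj inj) /=.
apply: eq_big => S.
  by rewrite card_imset //; apply: perm_inj.
by move=> _; rewrite -{1}(tpermR c c') mem_imset //; apply: perm_inj.
Qed.
Lemma cnt_val (R : realType) d k (c : 'I_d) :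
  d%:R * \sum_(S : {set 'I_d} | #|S| == k) ((c \in S)%:R : R) =
  k%:R * ('C(d, k))%:R.
Proof.
have h : \sum_(c' < d) \sum_(S : {set 'I_d} | #|S| == k) ((c' \in S)%:R : R) =
         d%:R * \sum_(S : {set 'I_d} | #|S| == k) ((c \in S)%:R : R).
  rewrite (eq_bigr _ (fun c' _ => cnt_sym R d k c' c)) sumr_const card_ord.
  by rewrite mulr_natl.
rewrite -h exchange_big /=.
rewrite (eq_bigr (fun _ => k%:R)); last first.
  move=> S /eqP cS; rewrite -cS -sum1_card natr_sum.
  by rewrite [RHS]big_mkcond; apply: eq_bigr => i _; case: (i \in S).
have := card_draws 'I_d k; rewrite card_ord => <-.
rewrite sumr_const -mulr_natr.
have -> : #|[set A : {set 'I_d} | #|A| == k]| = #|[pred i : {set 'I_d} | #|i| == k]|.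
  by apply: eq_card => S; rewrite !inE.
by rewrite [RHS]mulr_natr.
Qed.
Lemma l1_priv (R : realType) d (w : 'I_d -> R) k eps (S : {set 'I_d}) :
  #|S| = k -> (k <= d)%N ->
  l1norm (priv_view w k eps S) =
  k%:R * `|a_k w k eps - b_k w k eps| + (d%:R - k%:R) * `|b_k w k eps|.
Proof.
move=> cS kd.
rewrite /l1norm (bigID (fun j => j \in S)) /=.
under eq_bigr => j jS do rewrite /priv_view jS mulr1.
under [X in _ + X]eq_bigr => j jS do rewrite /priv_view (negbTE jS) mulr0 sub0r normrN.
rewrite sumr_const.
have -> : \sum_(i < d | i \notin S) `|b_k w k eps| = `|b_k w k eps| *+ #|~: S|.
  by rewrite -sumr_const; apply: eq_bigl => i; rewrite inE.
have hC : #|~: S| = (d - k)%N by have h := cardsC S; rewrite card_ord cS in h; apply/eqP; rewrite -(eqn_add2l k) subnKC // h.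
by rewrite hC cS -mulr_natl -[_ *+ (d - k)]mulr_natl natrB // !mulr1 [k%:R * _]mulr_natl.
Qed.
Lemma wmin_avg (R : realType) d (w : 'I_d -> R) k :
  (forall i j : 'I_d, (i <= j)%N -> w j <= w i) -> (k <= d)%N ->
  d%:R * wmin w k <= k%:R * Wsum w.
Proof.
move=> mono kd.
set P := fun j : 'I_d => (d - k <= j)%N.
have cardP : \sum_(j < d | P j) (1:R) = k%:R.
  have := big_geq_mkord (op:=+%R) (d-k) d predT (fun _ => 1:R).
  rewrite sumr_const_nat subKn // => ->.
have cardNP : \sum_(j < d | ~~ P j) (1:R) = d%:R - k%:R.
  have h : \sum_(j < d) (1:R) = d%:R by rewrite sumr_const card_ord.
  by rewrite (bigID P) /= cardP in h; rewrite -h; ring.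
have WNP : \sum_(j < d | ~~ P j) w j = Wsum w - wmin w k.
  have h : Wsum w = wmin w k + \sum_(j < d | ~~ P j) w j by rewrite /Wsum (bigID P).
  by rewrite h; ring.
have H : 0 <= \sum_(i < d | ~~ P i) \sum_(j < d | P j) (w i - w j).
  apply: sumr_ge0 => i Pi; apply: sumr_ge0 => j Pj; rewrite subr_ge0; apply: mono.
  by move: Pi Pj; rewrite /P -ltnNge => /ltnW h1 h2; apply: leq_trans h1 h2.
have E : forall i : 'I_d, \sum_(j < d | P j) (w i - w j) = w i * k%:R - wmin w k.
  by move=> i; rewrite sumrB -cardP big_distrr /= mulr1.
rewrite (eq_bigr _ (fun i _ => E i)) in H.
rewrite sumrB -big_distrl /= WNP in H.
have eW : \sum_(i < d | ~~ P i) wmin w k = wmin w k * (d%:R - k%:R).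
  by rewrite -cardNP big_distrr /= mulr1.
rewrite eW in H.
lra.
Qed.

Lemma sumX (R : realType) d k (v : 'I_d -> R) (c0 : 'I_d) :
  \sum_(S : {set 'I_d} | #|S| == k) \sum_(c in S) v c =
  (\sum_(S : {set 'I_d} | #|S| == k) ((c0 \in S)%:R : R)) * \sum_(c < d) v c.
Proof.
rewrite (eq_bigr (fun S : {set 'I_d} => \sum_(c < d) v c * (c \in S)%:R)); last first.
  by move=> S _; rewrite big_mkcond; apply: eq_bigr => c _; case: (c \in S); rewrite ?mulr1 ?mulr0.
rewrite exchange_big /= big_distrr /=; apply: eq_bigr => c _.
by rewrite -big_distrr /= (cnt_sym R d k c c0) mulrC.
Qed.

Lemma sum_const_k (R : realType) d k (x : R) :
  \sum_(S : {set 'I_d} | #|S| == k) x = x * ('C(d, k))%:R.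
Proof.
have := card_draws 'I_d k; rewrite card_ord => <-.
rewrite sumr_const -mulr_natr.
have -> : #|[set A : {set 'I_d} | #|A| == k]| = #|[pred i : {set 'I_d} | #|i| == k]|.
  by apply: eq_card => S; rewrite !inE.
by rewrite mul1r mulr_natr.
Qed.

Lemma sum_prob (R : realType) d (w : 'I_d -> R) k eps (s : 'S_d) :
  0 < eps ->
  (forall i j : 'I_d, (i <= j)%N -> w j <= w i) ->
  (1 <= k)%N -> (k <= d - 1)%N ->
  wmin w k < wmax w k ->
  \sum_(S : {set 'I_d} | #|S| == k) mech_prob w k eps (scored_vote w s) S = 1.
Proof.
move=> epos mono k1 kd hmm.
have d0 : (0 < d)%N by apply: leq_trans k1 (leq_trans kd (leq_subr 1 d)).
have kd' : (k <= d)%N by apply: leq_trans kd (leq_subr 1 d).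
pose c0 := Ordinal d0.
set N := \sum_(S : {set 'I_d} | #|S| == k) ((c0 \in S)%:R : R).
have hN : d%:R * N = k%:R * ('C(d, k))%:R by apply: cnt_val.
have hW : \sum_(c < d) scored_vote w s c = Wsum w.
  by rewrite /scored_vote /Wsum [RHS](reindex_inj (@perm_inj _ s)).
have avg := wmin_avg R d w k mono kd'.
have e1 : 1 < expR eps by rewrite expR_gt1.
rewrite /mech_prob big_split /= -!big_distrl /= sumrB (sumX _ _ _ _ c0) -/N hW !sum_const_k.
have dn0 : d%:R != 0 :> R by rewrite pnatr_eq0 -lt0n.
have C0 : ('C(d, k))%:R != 0 :> R by rewrite pnatr_eq0 -lt0n bin_gt0.
have D0 : wmax w k - wmin w k != 0 by rewrite subr_eq0 gt_eqF.
have NE : N = k%:R * ('C(d, k))%:R / d%:R by rewrite -hN mulrC mulKf.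
have Q0 : 0 < k%:R / d%:R * (expR eps - 1) * Wsum w - expR eps * wmin w k + wmax w k.
  have h1 : wmin w k <= k%:R / d%:R * Wsum w.
    by rewrite mulrAC ler_pdivlMr ?ltr0n // mulrC.
  have h2 : 0 <= (expR eps - 1) * (k%:R / d%:R * Wsum w - wmin w k).
    by apply: mulr_ge0; lra.
  have -> : k%:R / d%:R * (expR eps - 1) * Wsum w - expR eps * wmin w k + wmax w k
     = (expR eps - 1) * (k%:R / d%:R * Wsum w - wmin w k) + (wmax w k - wmin w k) by ring.
  lra.
rewrite NE /Phi.
field.
have Qd : k%:R * (expR eps - 1) * Wsum w + - (expR eps * wmin w k) * d%:R + wmax w k * d%:R
  = (k%:R / d%:R * (expR eps - 1) * Wsum w - expR eps * wmin w k + wmax w k) * d%:R.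
  by field.
by rewrite Qd C0 dn0 D0 mulf_neq0 // (gt_eqF Q0).
Qed.

Lemma sum_ind (R : realType) d (S : {set 'I_d}) :
  \sum_(j < d) ((j \in S)%:R : R) = #|S|%:R.
Proof.
rewrite -sum1_card natr_sum.
by rewrite [RHS]big_mkcond; apply: eq_bigr => i _; case: (i \in S).
Qed.

Theorem theorem6p5 (R : realType) (d : nat) (w : 'I_d -> R) (k n : nat)
  (eps : R) :
  0 < eps -> (1 <= n)%N ->
  (forall i j : 'I_d, (i <= j)%N -> w j <= w i) ->
  (1 <= k)%N -> (k <= d - 1)%N ->
  wmin w k < wmax w k ->
  riskMM w k eps n
    = (k%:R * `|a_k w k eps - b_k w k eps| + (d%:R - k%:R) * `|b_k w k eps|)
        / n%:R
  /\ (forall s : 'S_d, riskEM w k eps n s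
    = (k%:R * `|a_k w k eps - b_k w k eps| + (d%:R - k%:R) * `|b_k w k eps|)
        / n%:R)
  /\ riskDD w k eps <= 2 * k%:R * `|a_k w k eps|.
Proof.
move=> epos n1 mono k1 kd hmm.
have kd' : (k <= d)%N by apply: leq_trans kd (leq_subr 1 d).
set c := (k%:R * `|a_k w k eps - b_k w k eps| + (d%:R - k%:R) * `|b_k w k eps|).
have L : forall S : {set 'I_d}, #|S| == k -> l1norm (priv_view w k eps S) = c.
  by move=> S /eqP cS; apply: l1_priv.
have c0 : 0 <= c.
  by rewrite /c addr_ge0 // mulr_ge0 // subr_ge0 ler_nat.
have n0 : 0 < n%:R :> R by rewrite ltr0n.
split.
  rewrite /riskMM; apply/le_anti/andP; split.
    apply: (big_ind (fun x => x <= c / n%:R)).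
    - by rewrite divr_ge0 // ltW.
    - by move=> x y hx hy; rewrite ge_max hx hy.
    - by move=> S HS; rewrite L.
  have /card_gt0P [S0 HS0] : (0 < #|[set A : {set 'I_d} | #|A| == k]|)%N.
    by rewrite card_draws card_ord bin_gt0.
  rewrite inE in HS0.
  by rewrite (bigD1 S0) //= le_max (L S0 HS0) lexx.
split.
  move=> s; rewrite /riskEM.
  rewrite (eq_bigr (fun S => mech_prob w k eps (scored_vote w s) S * (c / n%:R))); last first.
    by move=> S HS; rewrite L.
  by rewrite -big_distrl /= sum_prob // mul1r.
have B0 : 0 <= 2 * k%:R * `|a_k w k eps| by rewrite mulr_ge0 // mulr_ge0.
rewrite /riskDD; apply: (big_ind (fun x => x <= 2 * k%:R * `|a_k w k eps|)) => //.
  by move=> x y hx hy; rewrite ge_max hx hy.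
move=> S /eqP HS.
apply: (big_ind (fun x => x <= 2 * k%:R * `|a_k w k eps|)) => //.
  by move=> x y hx hy; rewrite ge_max hx hy.
move=> S' /eqP HS'.
rewrite /l1norm.
apply: (@le_trans _ _ (\sum_(j < d) `|a_k w k eps| * ((j \in S)%:R + (j \in S')%:R))).
  apply: ler_sum => j _.
  have -> : priv_view w k eps S j - priv_view w k eps S' j
    = a_k w k eps * ((j \in S)%:R - (j \in S')%:R) by rewrite /priv_view; ring.
  rewrite normrM ler_wpM2l //.
  by apply: le_trans (ler_normB _ _) _; rewrite !normr_nat.
rewrite -big_distrr /= big_split /= !sum_ind HS HS'.
by rewrite le_eqVlt; apply/orP; left; apply/eqP; ring.
Qed.
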